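(* There exists a family of smooth functions $\{\chi_\delta:\mathbb{R}\to[0,1]\}_{\delta\in(0,1]}$, depending continuously on $\delta$, such that: (i) for each $\delta\in(0,1]$, $\chi_\delta$ is decreasing; (ii) for each $\delta\in(0,1]$ there exists $\eta_\delta>0$ with $\chi_\delta(x)=1$ for $x<\eta_\delta$ and $\chi_\delta(x)=0$ for $x>\frac{\pi}{2}-\eta_\delta$; (iii) $\chi_\delta\to\mathbb{1}_{\{x\le0\}}$ pointwise as $\delta\downarrow0$; (iv) $$\lim_{\delta\downarrow0}\ \sup_{r\in(0,\pi/2)}\frac{\int_0^r-\chi_\delta'(x)\sin(x)\,dx}{\sin(r)}=0.$$ *)

(* Defs.v *)
From Stdlib Require Import Reals Lra.
From Coquelicot Require Import Coquelicot.
Open Scope R_scope.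

Definition ind_nonpos (x : R) : R := if Rle_dec x 0 then 1 else 0.

Definition sup_ratio (chi : R -> R) : Rbar :=
  Lub_Rbar (fun y => exists r, 0 < r < PI / 2 /\
    y = RInt (fun x => - Derive chi x * sin x) 0 r / sin r).

(* Main.v *)
Require Import Defs.
From Stdlib Require Import Reals Lra Lia.
From Coquelicot Require Import Coquelicot.
Open Scope R_scope.

Fixpoint Cn (n : nat) (f : R -> R) : Prop :=
  match n with
  | O => True
  | S n => (forall x, ex_derive f x) /\ Cn n (Derive f)
  end.

Lemma Cn_ext n : forall f g, (forall x, f x = g x) -> Cn n f -> Cn n g.
Proof.
induction n as [|n IH]; simpl; auto.
intros f g H [H1 H2]; split.
- intros x; apply ex_derive_ext with f; auto.
- apply IH with (Derive f); auto. intros x; apply Derive_ext; auto.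
Qed.

Lemma Cn_weak n : forall f, Cn (S n) f -> Cn n f.
Proof.
induction n as [|n IH]; simpl; auto.
intros f [H1 H2]; split; auto.
Qed.

Lemma Cn_const n : forall c, Cn n (fun _ => c).
Proof.
induction n as [|n IH]; simpl; auto.
intros c; split.
- intros; apply ex_derive_const.
- apply Cn_ext with (fun _ => 0); auto. intros; rewrite Derive_const; auto.
Qed.

Lemma Cn_id n : Cn n (fun x => x).
Proof.
destruct n; simpl; auto. split.
- intros; apply ex_derive_id.
- apply Cn_ext with (fun _ => 1). intros; rewrite <- (Derive_id x); reflexivity.
  apply Cn_const.
Qed.

Lemma Cn_plus n : forall f g, Cn n f -> Cn n g -> Cn n (fun x => f x + g x).
Proof.
induction n as [|n IH]; simpl; auto.
intros f g [F1 F2] [G1 G2]; split.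
- intros; apply (ex_derive_plus f g); auto.
- apply Cn_ext with (fun x => Derive f x + Derive g x).
  intros; rewrite Derive_plus; auto. apply IH; auto.
Qed.

Lemma Cn_mult n : forall f g, Cn n f -> Cn n g -> Cn n (fun x => f x * g x).
Proof.
induction n as [|n IH]; simpl; auto.
intros f g HF HG.
pose proof (Cn_weak _ _ HF) as HF'. pose proof (Cn_weak _ _ HG) as HG'.
destruct HF as [F1 F2]; destruct HG as [G1 G2]; split.
- intros; apply ex_derive_mult; auto.
- apply Cn_ext with (fun x => Derive f x * g x + f x * Derive g x).
  intros; rewrite Derive_mult; auto. apply Cn_plus; apply IH; auto.
Qed.

Lemma Cn_scal n c f : Cn n f -> Cn n (fun x => c * f x).
Proof. intros; apply Cn_mult with (f := fun _ => c); auto; apply Cn_const. Qed.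

Lemma Cn_opp n f : Cn n f -> Cn n (fun x => - f x).
Proof. intros H; apply Cn_ext with (fun x => (-1) * f x). intros; ring. apply Cn_scal; auto. Qed.

Lemma Cn_minus n f g : Cn n f -> Cn n g -> Cn n (fun x => f x - g x).
Proof. intros; apply Cn_plus; auto. apply Cn_opp; auto. Qed.

Lemma Cn_comp n : forall f g, Cn n f -> Cn n g -> Cn n (fun x => g (f x)).
Proof.
induction n as [|n IH]; simpl; auto.
intros f g HF HG.
pose proof (Cn_weak _ _ HF) as HF'.
destruct HF as [F1 F2]; destruct HG as [G1 G2]; split.
- intros; apply ex_derive_comp; auto.
- apply Cn_ext with (fun x => Derive f x * Derive g (f x)).
  intros; rewrite (Derive_comp g f); auto. apply Cn_mult; auto.
Qed.

Lemma Cn_inv n : forall f, (forall x, f x <> 0) -> Cn n f -> Cn n (fun x => / f x).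
Proof.
induction n as [|n IH]; simpl; auto.
intros f Hnz HF.
pose proof (Cn_weak _ _ HF) as HF'.
destruct HF as [F1 F2]; split.
- intros; apply ex_derive_inv; auto.
- apply Cn_ext with (fun x => - Derive f x * (/ f x * / f x)).
  intros; rewrite Derive_inv; auto. field; auto.
  apply Cn_mult. apply Cn_opp; auto. apply Cn_mult; apply IH; auto.
Qed.

Lemma Cn_ln n : forall f, (forall x, 0 < f x) -> Cn n f -> Cn n (fun x => ln (f x)).
Proof.
destruct n as [|n]; simpl; auto.
intros f Hp HF.
pose proof (Cn_weak _ _ HF) as HF'.
destruct HF as [F1 F2]; split.
- intros x; apply ex_derive_comp; auto.
  specialize (Hp x). auto_derive; lra.
- apply Cn_ext with (fun x => Derive f x * / f x).
  intros x; rewrite (Derive_comp ln f); auto.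
  2: { specialize (Hp x). auto_derive; lra. }
  f_equal. symmetry; apply is_derive_unique. specialize (Hp x). auto_derive. lra. field; lra.
  apply Cn_mult; auto. apply Cn_inv; auto. intros x; specialize (Hp x); lra.
Qed.

Lemma Derive_n_S f n y : Derive_n f (S n) y = Derive_n (Derive f) n y.
Proof.
revert y; induction n as [|n IH]; intros y; simpl. reflexivity.
apply Derive_ext; intros; apply IH.
Qed.

Lemma Cn_ex_aux n : forall f, Cn (S n) f -> forall x, ex_derive (Derive_n f n) x.
Proof.
induction n as [|n IH]; intros f H x.
- destruct H as [H1 _]; apply H1.
- destruct H as [H1 H2].
  apply ex_derive_ext with (Derive_n (Derive f) n).
  intros; symmetry; apply Derive_n_S.
  apply IH; auto.
Qed.

Lemma Cn_ex_derive_n n : forall f, Cn (S n) f -> forall x, ex_derive_n f n x.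
Proof.
destruct n; intros f H x. exact I.
exact (Cn_ex_aux n f (Cn_weak _ _ H) x).
Qed.


Definition g (k : nat) (t : R) : R :=
  if Rle_dec t 0 then 0 else exp (- / t) * (/ t) ^ k.

Lemma exp_pow n z : exp (INR n * z) = exp z ^ n.
Proof.
induction n as [|n IH]. simpl. rewrite Rmult_0_l, exp_0; auto.
rewrite S_INR, Rmult_plus_distr_r, Rmult_1_l, exp_plus, IH. simpl; ring.
Qed.

Lemma pow_le_exp n y : 0 < y -> y ^ n <= INR n ^ n * exp y.
Proof.
intros Hy. destruct n as [|n].
{ simpl. pose proof (exp_ineq1 y). assert (y <> 0) by lra. specialize (H H0). lra. }
set (m := INR (S n)).
assert (Hm : 0 < m) by (apply lt_0_INR; lia).
assert (E : exp y = exp (y / m) ^ S n).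
{ rewrite <- exp_pow. f_equal. fold m. field. lra. }
assert (H1 : y / m <= exp (y / m)).
{ assert (y / m <> 0). { apply Rgt_not_eq. apply Rdiv_lt_0_compat; lra. }
  pose proof (exp_ineq1 _ H). lra. }
assert (H2 : (y / m) ^ S n <= exp (y/m) ^ S n).
{ apply pow_incr. split; auto. left; apply Rdiv_lt_0_compat; lra. }
rewrite E.
replace (y ^ S n) with (m ^ S n * (y / m) ^ S n).
apply Rmult_le_compat_l; auto. apply pow_le; lra.
unfold Rdiv. rewrite Rpow_mult_distr, pow_inv. field. apply pow_nonzero; lra.
Qed.

Lemma g_deriv0 k : is_derive (g k) 0 0.
Proof.
apply is_derive_Reals. intros eps Heps.
set (m := INR (S (S k)) ^ S (S k)).
assert (Hm : 0 < m) by (apply pow_lt; apply lt_0_INR; lia).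
exists (mkposreal (eps / m) (Rdiv_lt_0_compat _ _ Heps Hm)).
intros h Hh Hlt. simpl in Hlt.
unfold g. rewrite Rplus_0_l.
destruct (Rle_dec 0 0) as [_|n0]; [|lra].
destruct (Rle_dec h 0) as [Hn|Hp].
{ replace ((0 - 0) / h - 0) with 0 by (field; auto). rewrite Rabs_R0; auto. }
assert (Hp' : 0 < h) by lra.
rewrite Rabs_pos_eq in Hlt by lra.
set (y := / h).
assert (Hy : 0 < y) by (apply Rinv_0_lt_compat; lra).
pose proof (pow_le_exp (S (S k)) y Hy) as P. fold m in P.
assert (Hey : 0 < exp y) by apply exp_pos.
replace ((exp (- y) * y ^ k - 0) / h - 0) with (exp (- y) * y ^ (S (S k)) * h).
2: { unfold y. simpl. field. lra. }
rewrite Rabs_pos_eq.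
2: { apply Rmult_le_pos; [|lra]. apply Rmult_le_pos. left; apply exp_pos. apply pow_le; lra. }
assert (exp (-y) * y ^ S (S k) <= m).
{ rewrite exp_Ropp. apply Rmult_le_reg_l with (exp y); auto.
  rewrite <- Rmult_assoc, Rinv_r by lra. lra. }
apply Rle_lt_trans with (m * h). apply Rmult_le_compat_r; lra.
apply Rmult_lt_reg_r with (/ m). apply Rinv_0_lt_compat; auto.
replace (m * h * / m) with h by (field; lra). apply Hlt.
Qed.

Lemma g_deriv k (t : R) : is_derive (g k) t (g (S (S k)) t - INR k * g (S k) t).
Proof.
destruct (Rtotal_order t 0) as [Hn|[Hz|Hp]].
- assert (E : forall k, g k t = 0). { intros; unfold g; destruct (Rle_dec t 0); lra. }
  rewrite !E. replace (0 - INR k * 0) with 0 by ring.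
  apply is_derive_ext_loc with (fun _ => 0).
  + apply (filter_imp (fun u => u < 0)). intros u Hu; unfold g; destruct (Rle_dec u 0); lra.
    apply open_lt; auto.
  + auto_derive; auto.
- subst t. unfold g at 2 3. destruct (Rle_dec 0 0); [|lra].
  replace (0 - INR k * 0) with 0 by ring. apply g_deriv0.
- assert (E : forall k, g k t = exp (- / t) * (/ t) ^ k).
  { intros; unfold g; destruct (Rle_dec t 0); lra. }
  rewrite !E.
  apply is_derive_ext_loc with (fun u => exp (- / u) * (/ u) ^ k).
  + apply (filter_imp (fun u => 0 < u)). intros u Hu; unfold g; destruct (Rle_dec u 0); lra.
    apply open_gt; auto.
  + destruct k as [|k].
    * auto_derive. lra. simpl. field. lra.
    * auto_derive. lra. simpl. change (match k with 0%nat => 1 | S _ => INR k + 1 end) with (INR (S k)). rewrite S_INR. field. lra.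
Qed.

Lemma Cn_g n : forall k, Cn n (g k).
Proof.
induction n as [|n IH]; simpl; auto.
intros k; split.
- intros x; eexists; apply g_deriv.
- apply Cn_ext with (fun t => g (S (S k)) t - INR k * g (S k) t).
  intros; symmetry; apply is_derive_unique, g_deriv.
  apply Cn_minus; auto. apply Cn_scal; auto.
Qed.


Definition hf (t : R) : R := g 0 t.
Definition sstep (t : R) : R := hf t / (hf t + hf (1 - t)).

Lemma hf_zero t : t <= 0 -> hf t = 0.
Proof. intros; unfold hf, g; destruct (Rle_dec t 0); lra. Qed.
Lemma hf_pos t : 0 < t -> 0 < hf t.
Proof. intros; unfold hf, g; destruct (Rle_dec t 0); [lra|]. simpl. rewrite Rmult_1_r; apply exp_pos. Qed.
Lemma hf_nonneg t : 0 <= hf t.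
Proof. destruct (Rle_dec t 0). rewrite hf_zero; lra. left; apply hf_pos; lra. Qed.
Lemma hf_mono t s : t <= s -> hf t <= hf s.
Proof.
intros H. destruct (Rle_dec t 0). rewrite hf_zero; auto; apply hf_nonneg.
unfold hf, g. destruct (Rle_dec t 0); [lra|]. destruct (Rle_dec s 0); [lra|]. simpl.
rewrite !Rmult_1_r.
destruct (Req_dec t s). subst; lra.
left; apply exp_increasing. apply Ropp_lt_contravar. apply Rinv_lt_contravar; nra.
Qed.
Lemma den_pos t : 0 < hf t + hf (1 - t).
Proof.
destruct (Rle_dec t 0). pose proof (hf_pos (1 - t)). pose proof (hf_nonneg t). lra.
pose proof (hf_pos t). pose proof (hf_nonneg (1 - t)). lra.
Qed.
Lemma sstep_0 t : t <= 0 -> sstep t = 0.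
Proof. intros; unfold sstep; rewrite hf_zero; auto. unfold Rdiv; ring. Qed.
Lemma sstep_1 t : 1 <= t -> sstep t = 1.
Proof. intros; unfold sstep; rewrite (hf_zero (1 - t)) by lra. pose proof (hf_pos t). field. lra. Qed.
Lemma sstep_bounds t : 0 <= sstep t <= 1.
Proof.
unfold sstep. pose proof (den_pos t). pose proof (hf_nonneg t). pose proof (hf_nonneg (1 - t)).
split. apply Rdiv_le_0_compat; lra.
apply Rmult_le_reg_r with (hf t + hf (1 - t)); auto. unfold Rdiv. rewrite Rmult_assoc, Rinv_l; lra.
Qed.
Lemma sstep_mono t s : t <= s -> sstep t <= sstep s.
Proof.
intros H. unfold sstep.
pose proof (den_pos t). pose proof (den_pos s).
pose proof (hf_mono _ _ H). pose proof (hf_mono (1 - s) (1 - t)) as Hq.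
assert (1 - s <= 1 - t) by lra. specialize (Hq H3).
pose proof (hf_nonneg t). pose proof (hf_nonneg (1 - s)).
apply Rmult_le_reg_r with ((hf t + hf (1 - t)) * (hf s + hf (1 - s))). nra.
replace (hf t / (hf t + hf (1 - t)) * ((hf t + hf (1 - t)) * (hf s + hf (1 - s))))
  with (hf t * (hf s + hf (1 - s))) by (field; lra).
replace (hf s / (hf s + hf (1 - s)) * ((hf t + hf (1 - t)) * (hf s + hf (1 - s))))
  with (hf s * (hf t + hf (1 - t))) by (field; lra).
nra.
Qed.

Lemma Cn_sstep n : Cn n sstep.
Proof.
unfold sstep. apply Cn_mult. apply Cn_g.
apply Cn_inv. intros x; pose proof (den_pos x); lra.
apply Cn_plus. apply Cn_g.
apply Cn_comp with (f := fun x => 1 - x) (g := hf). apply Cn_minus. apply Cn_const. apply Cn_id.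
apply Cn_g.
Qed.

Lemma ex_derive_sstep t : ex_derive sstep t.
Proof. destruct (Cn_sstep 1) as [H _]; apply H. Qed.

Lemma ex_derive_Dsstep t : ex_derive (Derive sstep) t.
Proof. destruct (Cn_sstep 2) as [_ [H _]]; apply H. Qed.

Lemma Dsstep_out t : t < 0 \/ 1 < t -> Derive sstep t = 0.
Proof.
intros [H|H].
- rewrite Derive_ext_loc with (g := fun _ => 0). apply Derive_const.
  apply (filter_imp (fun u => u < 0)). intros; apply sstep_0; lra. apply open_lt; auto.
- rewrite Derive_ext_loc with (g := fun _ => 1). apply Derive_const.
  apply (filter_imp (fun u => 1 < u)). intros; apply sstep_1; lra. apply open_gt; auto.
Qed.

Lemma Dsstep_bound : exists M, forall t, Rabs (Derive sstep t) <= M.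
Proof.
destruct (continuity_ab_maj (fun t => Rabs (Derive sstep t)) 0 1) as [Mx [HM _]]. lra.
{ intros c _. change (continuity_pt (comp Rabs (Derive sstep)) c).
  apply continuity_pt_comp. apply continuity_pt_filterlim.
  apply (ex_derive_continuous (K:=R_AbsRing) (V:=R_NormedModule) (Derive sstep)), ex_derive_Dsstep.
  apply Rcontinuity_abs. }
exists (Rabs (Derive sstep Mx)). intros t.
destruct (Rle_dec 0 t); [destruct (Rle_dec t 1)|].
- apply HM; lra.
- rewrite Dsstep_out by lra. rewrite Rabs_R0. apply Rabs_pos.
- rewrite Dsstep_out by lra. rewrite Rabs_R0. apply Rabs_pos.
Qed.


Definition uu (d x : R) : R := d * ln ((1 + (x * exp (/ d)) ^ 2) / 2).
Definition TT (d x : R) : R := sstep (x * exp (/ d)) * sstep (uu d x).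
Definition chi (d x : R) : R := 1 - TT d x.

Lemma TT_bounds d x : 0 <= TT d x <= 1.
Proof.
unfold TT. pose proof (sstep_bounds (x * exp (/ d))). pose proof (sstep_bounds (uu d x)). nra.
Qed.

Lemma TT_zero d x : 0 < d -> x * exp (/ d) <= 1 -> TT d x = 0.
Proof.
intros Hd H. unfold TT. destruct (Rle_dec x 0).
- rewrite sstep_0. ring. pose proof (exp_pos (/ d)). nra.
- rewrite (sstep_0 (uu d x)). ring. unfold uu.
  assert (0 < x * exp (/ d)) by (pose proof (exp_pos (/ d)); nra).
  assert (ln ((1 + (x * exp (/ d)) ^ 2) / 2) <= 0).
  { rewrite <- ln_1. apply ln_le. nra. simpl. nra. }
  nra.
Qed.

Lemma TT_one d x : 0 < d -> 0 < x -> 1 <= x * exp (/ d) -> 2 <= x ^ 2 * exp (/ d) -> TT d x = 1.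
Proof.
intros Hd Hx H1 H2. unfold TT. rewrite sstep_1 by auto. rewrite sstep_1. ring.
unfold uu. set (E := exp (/ d)) in *. assert (0 < E) by apply exp_pos.
assert (ln E <= ln ((1 + (x * E) ^ 2) / 2)).
{ apply ln_le; auto. simpl in *. nra. }
unfold E in H0 at 1. rewrite ln_exp in H0.
apply Rmult_le_compat_l with (r := d) in H0; [|lra].
rewrite Rinv_r in H0; lra.
Qed.

Lemma TT_mono d x y : 0 < d -> x <= y -> TT d x <= TT d y.
Proof.
intros Hd H. destruct (Rle_dec x 0).
- rewrite TT_zero; auto. apply TT_bounds. pose proof (exp_pos (/ d)). nra.
- unfold TT. pose proof (exp_pos (/ d)).
  apply Rmult_le_compat. apply sstep_bounds. apply sstep_bounds.
  apply sstep_mono; nra.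
  apply sstep_mono. unfold uu. apply Rmult_le_compat_l; [lra|].
  apply ln_le. simpl; nra. simpl. apply Rmult_le_compat_r; [lra|].
  apply Rplus_le_compat_l. rewrite !Rmult_1_r. apply Rmult_le_compat; nra.
Qed.

Lemma Cn_chi n d : 0 < d -> Cn n (chi d).
Proof.
intros Hd. unfold chi, TT.
apply Cn_minus. apply Cn_const. apply Cn_mult.
- apply Cn_comp with (f := fun x => x * exp (/ d)) (g := sstep). 2: apply Cn_sstep.
  apply Cn_mult. apply Cn_id. apply Cn_const.
- apply Cn_comp with (f := uu d) (g := sstep). 2: apply Cn_sstep.
  unfold uu. apply Cn_scal.
  apply Cn_ln with (f := fun x => (1 + (x * exp (/ d)) ^ 2) / 2).
  intros x; simpl; nra.
  apply Cn_ext with (fun x => (1 + (x * exp (/ d)) * (x * exp (/ d))) * / 2).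
  intros; simpl; unfold Rdiv; ring.
  apply Cn_mult. apply Cn_plus. apply Cn_const.
  apply Cn_mult; (apply Cn_mult; [apply Cn_id | apply Cn_const]).
  apply Cn_const.
Qed.

Lemma chi_deriv d x : 0 < d ->
  Derive (chi d) x = - (exp (/ d) * Derive sstep (x * exp (/ d)) * sstep (uu d x)
     + sstep (x * exp (/ d)) * (Derive sstep (uu d x) * (d * (2 * x * exp (/ d) ^ 2 / (1 + (x * exp (/ d)) ^ 2))))).
Proof.
intros Hd. apply is_derive_unique. unfold chi, TT, uu.
pose proof (ex_derive_sstep (x * exp (/ d))).
pose proof (ex_derive_sstep (d * ln ((1 + (x * exp (/ d)) ^ 2) / 2))).
auto_derive.
- repeat split; auto. simpl; nra.
- simpl. change (fun x0 : R => sstep x0) with sstep. unfold Rdiv. set (E := exp (/ d)). field. nra.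
Qed.

Lemma sstep_uu_zero d x : 0 < d -> 0 <= x -> x * exp (/ d) <= 1 -> sstep (uu d x) = 0.
Proof.
intros Hd Hx H. apply sstep_0. unfold uu.
assert (0 <= x * exp (/ d)) by (pose proof (exp_pos (/ d)); nra).
assert (ln ((1 + (x * exp (/ d)) ^ 2) / 2) <= 0).
{ rewrite <- ln_1. apply ln_le. simpl; nra. simpl. nra. }
nra.
Qed.

Lemma chi_deriv_bound : exists M, 0 <= M /\ forall d x, 0 < d -> 0 <= x ->
  Rabs (Derive (chi d) x) * x <= 2 * d * M.
Proof.
destruct Dsstep_bound as [M HM]. exists M. split.
{ specialize (HM 0). pose proof (Rabs_pos (Derive sstep 0)). lra. }
intros d x Hd Hx. rewrite chi_deriv by auto.
set (E := exp (/ d)). assert (HE : 0 < E) by apply exp_pos.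
assert (Z : E * Derive sstep (x * E) * sstep (uu d x) = 0).
{ destruct (Rle_dec (x * E) 1).
  - rewrite sstep_uu_zero; auto; ring.
  - rewrite Dsstep_out by lra. ring. }
rewrite Z, Rplus_0_l, Rabs_Ropp.
set (w := d * (2 * x * E ^ 2 / (1 + (x * E) ^ 2))).
rewrite !Rabs_mult.
assert (Hw : 0 <= w * x <= 2 * d).
{ unfold w. assert (0 < 1 + (x * E) ^ 2) by (simpl; nra).
  replace (d * (2 * x * E ^ 2 / (1 + (x * E) ^ 2)) * x) with (2 * d * ((x * E) ^ 2 / (1 + (x * E) ^ 2))) by (field; lra).
  assert (0 <= (x * E) ^ 2 / (1 + (x * E) ^ 2) <= 1).
  { split. apply Rdiv_le_0_compat; [simpl; nra|lra].
    apply Rmult_le_reg_r with (1 + (x * E) ^ 2); auto. unfold Rdiv. rewrite Rmult_assoc, Rinv_l; lra. }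
  nra. }
assert (Hw0 : 0 <= w).
{ unfold w. apply Rmult_le_pos; [lra|]. apply Rdiv_le_0_compat. simpl; nra. simpl; nra. }
rewrite (Rabs_pos_eq w Hw0).
pose proof (sstep_bounds (x * E)). rewrite (Rabs_pos_eq (sstep (x * E))) by lra.
specialize (HM (uu d x)). pose proof (Rabs_pos (Derive sstep (uu d x))).
replace (sstep (x * E) * (Rabs (Derive sstep (uu d x)) * w) * x) with (sstep (x * E) * Rabs (Derive sstep (uu d x)) * (w * x)) by ring.
assert (0 <= sstep (x * E) * Rabs (Derive sstep (uu d x)) <= M) by nra.
nra.
Qed.


Lemma cmul {U : UniformSpace} (f g : U -> R) p : continuous f p -> continuous g p -> continuous (fun q => f q * g q) p.
Proof. intros; exact (continuous_mult f g p H H0). Qed.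
Lemma cminus {U : UniformSpace} (f g : U -> R) p : continuous f p -> continuous g p -> continuous (fun q => f q - g q) p.
Proof. intros. exact (continuous_plus f (fun q => opp (g q)) p H (continuous_opp g p H0)). Qed.
Lemma ccomp {U : UniformSpace} (f : U -> R) (h : R -> R) p : continuous f p -> ex_derive h (f p) -> continuous (fun q => h (f q)) p.
Proof. intros. apply (continuous_comp f h p H). exact (ex_derive_continuous (K:=R_AbsRing) (V:=R_NormedModule) h (f p) H0). Qed.

Lemma chi_cont d x : 0 < d ->
  continuous (fun p : R * R => chi (fst p) (snd p)) (d, x).
Proof.
intros Hd. unfold chi, TT, uu.
apply cminus. apply continuous_const.
assert (HA : continuous (fun p : R * R => snd p * exp (/ fst p)) (d, x)).
{ apply cmul. apply continuous_snd.
  apply ccomp with (h := exp) (f := fun p : R * R => / fst p).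
  apply ccomp with (h := fun z => / z) (f := fun p : R * R => fst p). apply continuous_fst.
  simpl. auto_derive. lra. auto_derive; auto. }
apply cmul.
- apply ccomp with (h := sstep) (f := fun p : R * R => snd p * exp (/ fst p)); auto. apply ex_derive_sstep.
- apply ccomp with (h := sstep) (f := fun p : R * R => fst p * ln ((1 + (snd p * exp (/ fst p)) ^ 2) / 2)).
  2: apply ex_derive_sstep.
  apply cmul. apply continuous_fst.
  apply ccomp with (h := fun z => ln ((1 + z ^ 2) / 2)) (f := fun p : R * R => snd p * exp (/ fst p)); auto.
  auto_derive. simpl; nra.
Qed.


Lemma sin_lb3 x : 0 <= x <= 2 -> x / 3 <= sin x.
Proof.
intros H. pose proof (pre_sin_bound x 0 ltac:(lra) ltac:(lra)) as [H1 _].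
eapply Rle_trans; [|apply H1].
unfold sin_approx, sin_term. simpl. nra.
Qed.

Lemma ratio_bound M d r : 0 < d -> 0 <= M ->
  (forall x, 0 <= x -> Rabs (Derive (chi d) x) * x <= 2 * d * M) ->
  0 < r < PI / 2 ->
  Rabs (RInt (fun x => - Derive (chi d) x * sin x) 0 r / sin r) <= 6 * d * M.
Proof.
intros Hd HM0 HM Hr.
pose proof PI_4.
assert (Hs : r / 3 <= sin r) by (apply sin_lb3; lra).
assert (HI : Rabs (RInt (fun x => - Derive (chi d) x * sin x) 0 r) <= (r - 0) * (2 * d * M)).
{ apply abs_RInt_le_const. lra.
  - apply (ex_RInt_continuous (V:=R_CompleteNormedModule)). intros z _.
    apply cmul.
    + apply ccomp with (f := Derive (chi d)) (h := fun z => - z).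
      * apply (ex_derive_continuous (K:=R_AbsRing) (V:=R_NormedModule)).
        destruct (Cn_chi 2 d Hd) as [_ [H2 _]]. apply H2.
      * auto_derive; auto.
    + apply (ex_derive_continuous (K:=R_AbsRing) (V:=R_NormedModule)). auto_derive; auto.
  - intros t Ht. rewrite Rabs_mult, Rabs_Ropp.
    assert (0 <= sin t <= t).
    { split. apply sin_ge_0; lra. destruct (Req_dec t 0). subst; rewrite sin_0; lra.
      left; apply sin_lt_x; lra. }
    rewrite (Rabs_pos_eq (sin t)) by lra.
    specialize (HM t ltac:(lra)). pose proof (Rabs_pos (Derive (chi d) t)). nra. }
unfold Rdiv. rewrite Rabs_mult, Rabs_inv, (Rabs_pos_eq (sin r)) by lra.
apply Rmult_le_reg_r with (sin r). lra.
rewrite Rmult_assoc, Rinv_l by lra. assert (0 <= d * M) by nra. nra.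
Qed.

Lemma sup_ratio_bnd M d : 0 < d -> 0 <= M ->
  (forall x, 0 <= x -> Rabs (Derive (chi d) x) * x <= 2 * d * M) ->
  exists z, sup_ratio (chi d) = Finite z /\ Rabs z <= 6 * d * M.
Proof.
intros Hd HM0 HM. unfold sup_ratio.
destruct (Lub_Rbar_correct (fun y => exists r, 0 < r < PI / 2 /\
    y = RInt (fun x => - Derive (chi d) x * sin x) 0 r / sin r)) as [Hub Hlub].
set (l := Lub_Rbar _) in *.
assert (Hy : forall y, (exists r, 0 < r < PI / 2 /\
    y = RInt (fun x => - Derive (chi d) x * sin x) 0 r / sin r) -> Rabs y <= 6 * d * M).
{ intros y [r [Hr ->]]. apply ratio_bound; auto. }
assert (H1 : Rbar_le l (Finite (6 * d * M))).
{ apply Hlub. intros y Ey. specialize (Hy y Ey). simpl. apply Rabs_le_between in Hy; lra. }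
set (y1 := RInt (fun x => - Derive (chi d) x * sin x) 0 1 / sin 1).
assert (E1 : exists r, 0 < r < PI / 2 /\ y1 = RInt (fun x => - Derive (chi d) x * sin x) 0 r / sin r).
{ exists 1. split; auto. pose proof PI2_3_2. lra. }
pose proof (Hub y1 E1) as H2. pose proof (Hy y1 E1) as H3.
apply Rabs_le_between in H3.
destruct l as [z| |]; simpl in *; try contradiction.
exists z; split; auto. apply Rabs_le_between. lra.
Qed.


Theorem lemma3p2 :
  exists chi : R -> R -> R,
    (forall d, 0 < d <= 1 -> forall (n : nat) (x : R), ex_derive_n (chi d) n x) /\
    (forall d, 0 < d <= 1 -> forall x, 0 <= chi d x <= 1) /\
    (forall d x, 0 < d <= 1 ->
       filterlim (fun p : R * R => chi (fst p) (snd p))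
         (within (fun p : R * R => 0 < fst p <= 1) (locally (d, x)))
         (locally (chi d x))) /\
    (forall d, 0 < d <= 1 -> forall x y, x <= y -> chi d y <= chi d x) /\
    (forall d, 0 < d <= 1 -> exists eta, 0 < eta /\
       (forall x, x < eta -> chi d x = 1) /\
       (forall x, PI / 2 - eta < x -> chi d x = 0)) /\
    (forall x, filterlim (fun d => chi d x) (at_right 0) (locally (ind_nonpos x))) /\
    filterlim (fun d => sup_ratio (chi d)) (at_right 0) (Rbar_locally (Finite 0)).
Proof.
exists chi. split; [|split; [|split; [|split; [|split; [|split]]]]].
- intros d [Hd _] n x. apply Cn_ex_derive_n. apply Cn_chi; auto.
- intros d [Hd _] x. unfold chi. pose proof (TT_bounds d x). lra.
- intros d x [Hd _]. apply (filterlim_filter_le_1 (F := locally (d, x))).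
  apply filter_le_within. exact (chi_cont d x Hd).
- intros d [Hd _] x y H. unfold chi. pose proof (TT_mono d x y Hd H). lra.
- intros d [Hd Hd1]. set (E := exp (/ d)).
  assert (HE : 2 < E).
  { assert (1 <= / d). { rewrite <- Rinv_1. apply Rinv_le_contravar; lra. }
    assert (exp 1 <= E).
    { unfold E. destruct (Req_dec 1 (/ d)) as [e|n]. rewrite <- e; lra.
      left; apply exp_increasing; lra. }
    pose proof (exp_ineq1 1 ltac:(lra)). lra. }
  exists (/ E). split; [apply Rinv_0_lt_compat; lra|split].
  + intros x Hx. unfold chi. rewrite TT_zero; auto. lra.
    fold E. apply Rmult_lt_compat_r with (r := E) in Hx; [|lra].
    rewrite Rinv_l in Hx; lra.
  + intros x Hx. assert (/ E < 1 / 2).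
    { apply Rmult_lt_reg_r with E. lra. rewrite Rinv_l by lra. lra. }
    pose proof PI2_3_2. assert (1 < x) by lra.
    unfold chi. rewrite TT_one; auto; try lra; fold E; nra.
- intros x. unfold ind_nonpos. destruct (Rle_dec x 0) as [Hx|Hx].
  + intros P HP. exists (mkposreal 1 Rlt_0_1). intros d _ Hd.
    unfold chi. rewrite TT_zero; auto.
    replace (1 - 0) with 1 by ring. apply locally_singleton; auto.
    pose proof (exp_pos (/ d)). nra.
  + assert (Hx' : 0 < x) by lra.
    intros P HP. assert (Hm : 0 < Rmin (x ^ 2 / 2) x).
    { apply Rmin_case. simpl. nra. auto. }
    exists (mkposreal _ Hm). intros d Hb Hd. simpl in Hb.
    change (Rabs (d - 0) < Rmin (x ^ 2 / 2) x) in Hb.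
    rewrite Rminus_0_r, Rabs_pos_eq in Hb by lra.
    assert (H1 : d < x ^ 2 / 2) by (eapply Rlt_le_trans; [apply Hb|apply Rmin_l]).
    assert (H2 : d < x) by (eapply Rlt_le_trans; [apply Hb|apply Rmin_r]).
    assert (HE : / d < exp (/ d)).
    { pose proof (exp_ineq1 (/ d)). assert (0 < / d) by (apply Rinv_0_lt_compat; lra).
      assert (/ d <> 0) by lra. specialize (H H3). lra. }
    assert (Hid : d * / d = 1) by (field; lra).
    unfold chi. rewrite TT_one; auto.
    replace (1 - 1) with 0 by ring. apply locally_singleton; auto.
    * assert (x * / d > 1).
      { apply Rmult_lt_reg_r with d; auto. rewrite Rmult_assoc, Rinv_l by lra. lra. }
      assert (0 < / d) by (apply Rinv_0_lt_compat; lra). nra.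
    * assert (x ^ 2 * / d > 2).
      { apply Rmult_lt_reg_r with d; auto. rewrite Rmult_assoc, Rinv_l by lra. lra. }
      assert (0 < / d) by (apply Rinv_0_lt_compat; lra). assert (0 < x ^ 2) by (simpl; nra). nra.
- destruct chi_deriv_bound as [M [HM0 HM]].
  intros P [eps HP].
  assert (Hm : 0 < eps / (6 * M + 1)).
  { apply Rdiv_lt_0_compat. apply cond_pos. lra. }
  exists (mkposreal _ Hm). intros d Hb Hd. simpl in Hb.
  change (Rabs (d - 0) < eps / (6 * M + 1)) in Hb.
  rewrite Rminus_0_r, Rabs_pos_eq in Hb by lra.
  destruct (sup_ratio_bnd M d Hd HM0 (fun x => HM d x Hd)) as [z [Ez Hz]].
  rewrite Ez. apply HP. change (Rabs (z - 0) < eps).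
  rewrite Rminus_0_r.
  eapply Rle_lt_trans. apply Hz.
  assert (d * (6 * M + 1) < eps).
  { apply Rmult_lt_reg_r with (/ (6 * M + 1)). apply Rinv_0_lt_compat; lra.
    rewrite Rmult_assoc, Rinv_r by lra. lra. }
  nra.
Qed.
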